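(* Let $\theta>0$, $n\ge2$, and let $K$ be the size of the subtree rooted at vertex $1$ in the Hoppe tree with $n$ vertices (with the law $\Pr(K=m)=\binom{n-2}{m-1}\theta^{(n-m-1)}(m-1)!/(\theta+1)^{(n-2)}$, $1\le m\le n-1$). Then jointly $$\begin{pmatrix}W_n'\\ T_n'\end{pmatrix}\overset{d}{=}\begin{pmatrix}1&K\\0&1\end{pmatrix}\begin{pmatrix}W_{n-K}'\\ T_{n-K}'\end{pmatrix}+\begin{pmatrix}1&n-K\\0&1\end{pmatrix}\begin{pmatrix}W_K\\ T_K\end{pmatrix}+\begin{pmatrix}K(n-K)\\ K\end{pmatrix},$$ where $(W_j',T_j')_{j\ge1}$ (Hoppe tree with parameter $\theta$), $(W_j,T_j)_{j\ge1}$ (random recursive tree) and $K$ are independent.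
   Context: Let $(J_k)_{k\ge1}$ be independent with $\Pr(J_k=0)=\frac{\theta}{\theta+k-1}$ and $\Pr(J_k=i)=\frac{1}{\theta+k-1}$ for $i\in\{1,\dots,k-1\}$. The Hoppe tree with $n$ vertices has vertex set $\{0,\dots,n-1\}$, root $0$, parent of $k\ge1$ equal to $J_k$; for $\theta=1$ it is the random recursive tree. $T_j$ is the total length (sum of depths of all vertices) and $W_j$ the Wiener index (sum of graph distances over unordered pairs of distinct vertices) of the tree with $j$ vertices; primes denote the Hoppe tree with parameter $\theta$, unprimed the random recursive tree. $x^{(k)}=x(x+1)\cdots(x+k-1)$ is the rising factorial. *)

(* Defs.v *)
From HB Require Import structures.
From mathcomp Require Import all_boot all_order all_algebra.
Set Implicit Arguments. Unset Strict Implicit. Unset Printing Implicit Defensive.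
Import Order.TTheory GRing.Theory Num.Theory.

(* A tree on vertices {0,...,N-1} (root 0) is encoded by its parent sequence
   s = [:: J_1; ...; J_(N-1)], with J_k < k (the parent of vertex k). *)

Fixpoint trees_aux (k : nat) : seq (seq nat) :=
  match k with
  | 0 => [:: [::]]
  | k'.+1 => flatten [seq [seq rcons s j | j <- iota 0 k'.+1] | s <- trees_aux k']
  end.

Definition trees (n : nat) : seq (seq nat) := trees_aux n.-1.

Definition parent (s : seq nat) (v : nat) : nat := nth 0 s v.-1.

Fixpoint anc_f (fuel : nat) (s : seq nat) (v : nat) : seq nat :=
  match fuel with
  | 0 => [:: v]
  | f.+1 => if v is 0 then [:: 0] else v :: anc_f f s (parent s v)
  end.
Definition anc (s : seq nat) (v : nat) : seq nat := anc_f v s v.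

Definition depth (s : seq nat) (v : nat) : nat := (size (anc s v)).-1.

(* graph distance in the tree: the path u -- v uses exactly the edges
   (x, parent x) for x an ancestor of exactly one of u, v *)
Definition dist (s : seq nat) (u v : nat) : nat :=
  count (fun x => x \notin anc s v) (anc s u) + count (fun x => x \notin anc s u) (anc s v).

Definition nverts (s : seq nat) : nat := (size s).+1.

Definition Tlen (s : seq nat) : nat := \sum_(0 <= v < nverts s) depth s v.

Definition Wien (s : seq nat) : nat :=
  \sum_(0 <= v < nverts s) \sum_(0 <= u < v) dist s u v.

Definition subsize1 (s : seq nat) : nat :=
  count (fun v => 1 \in anc s v) (iota 0 (nverts s)).

(* probability of the parent sequence s under the Hoppe tree law with
   parameter theta: Pr(J_k = 0) = theta/(theta+k-1), Pr(J_k = i) = 1/(theta+k-1) *)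
Definition weight (R : realFieldType) (theta : R) (s : seq nat) : R :=
  \prod_(i < size s) (if nth 0 s i == 0 then theta / (theta + i%:R) else 1 / (theta + i%:R)).

Definition lawWT (R : realFieldType) (theta : R) (n w t : nat) : R :=
  \sum_(s <- trees n) weight theta s * ((Wien s == w) && (Tlen s == t))%:R.

Definition lawK (R : realFieldType) (theta : R) (n m : nat) : R :=
  \sum_(s <- trees n) weight theta s * (subsize1 s == m)%:R.

(* Main.v *)
Require Import Defs.
From HB Require Import structures.
From mathcomp Require Import all_boot all_order all_algebra.
From mathcomp Require Import zify ring lra.
Import Order.TTheory GRing.Theory Num.Theory.


Local Close Scope ring_scope.

Definition valid (s : seq nat) := forall i, i < size s -> nth 0 s i <= i.

Lemma parent_lt s v : valid s -> 0 < v -> parent s v < v.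
Proof.
move=> hv; rewrite /parent; case: v => // v _ /=.
case: (ltnP v (size s)) => h; first by have := hv _ h; lia.
by rewrite nth_default.
Qed.

Lemma anc_f_fuel s f g v : valid s -> v <= f -> v <= g -> anc_f f s v = anc_f g s v.
Proof.
move=> hs; elim: f g v => [|f IH] g v.
  by rewrite leqn0 => /eqP -> _; case: g.
case: v => [|v]; first by case: g.
case: g => // g h1 h2 /=; congr (_ :: _); apply: IH.
  by have := @parent_lt s v.+1 hs isT; lia.
by have := @parent_lt s v.+1 hs isT; lia.
Qed.

Lemma anc_f_rcons_old s j f v : valid s -> v <= size s ->
  anc_f f (rcons s j) v = anc_f f s v.
Proof.
move=> hs; elim: f v => [|f IH] v //; case: v => [|v] // hv /=.
have hp : parent (rcons s j) v.+1 = parent s v.+1.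
  by rewrite /parent /= nth_rcons hv.
rewrite hp IH //; have := @parent_lt s v.+1 hs isT; lia.
Qed.

Lemma anc_rcons_old s j v : valid s -> v <= size s -> anc (rcons s j) v = anc s v.
Proof. by move=> hs hv; rewrite /anc anc_f_rcons_old. Qed.

Lemma anc_rcons_new s j : valid s -> j <= size s ->
  anc (rcons s j) (size s).+1 = (size s).+1 :: anc s j.
Proof.
move=> hs hj; rewrite /anc /=.
have -> : parent (rcons s j) (size s).+1 = j by rewrite /parent /= nth_rcons ltnn eqxx.
by rewrite anc_f_rcons_old // (@anc_f_fuel s _ j).
Qed.

Lemma anc_le s f v x : valid s -> x \in anc_f f s v -> x <= v.
Proof.
move=> hs; elim: f v => [|f IH] v /=; first by rewrite inE => /eqP ->.
case: v => [|v]; first by rewrite inE => /eqP ->.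
rewrite inE => /orP [/eqP -> //|/IH].
have := @parent_lt s v.+1 hs isT; lia.
Qed.

Lemma anc_size s f v : 0 < size (anc_f f s v).
Proof. by case: f => [|f] //=; case: v. Qed.

Lemma depth_rcons_old s j v : valid s -> v <= size s -> depth (rcons s j) v = depth s v.
Proof. by move=> hs hv; rewrite /depth anc_rcons_old. Qed.

Lemma depth_rcons_new s j : valid s -> j <= size s ->
  depth (rcons s j) (size s).+1 = (depth s j).+1.
Proof.
move=> hs hj; rewrite /depth anc_rcons_new //= prednK //; exact: anc_size.
Qed.

Lemma dist_rcons_old s j u v : valid s -> u <= size s -> v <= size s ->
  dist (rcons s j) u v = dist s u v.
Proof. by move=> hs hu hv; rewrite /dist !anc_rcons_old. Qed.

Lemma dist_rcons_new s j u : valid s -> j <= size s -> u <= size s ->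
  dist (rcons s j) u (size s).+1 = (dist s u j).+1.
Proof.
move=> hs hj hu; rewrite /dist (anc_rcons_old _ _ _ hs hu) anc_rcons_new //=.
have hn : (size s).+1 \notin anc s u.
  by by apply/negP => /(anc_le _ _ _ _ hs); lia.
rewrite hn add1n addnS; congr (_ + _).+1.
apply: eq_in_count => x hx /=; rewrite inE negb_or.
have := anc_le _ _ _ _ hs hx; case: eqP => //; lia.
Qed.

Lemma dist_refl s u : dist s u u = 0.
Proof.
rewrite /dist; suff -> : count (fun x => x \notin anc s u) (anc s u) = 0 by [].
apply/eqP; rewrite -leqn0 leqNgt -has_count; apply/hasPn => x hx; by rewrite negbK.
Qed.

Lemma dist_sym s u v : dist s u v = dist s v u.
Proof. by rewrite /dist addnC. Qed.

Lemma Tlen_rcons s j : valid s -> j <= size s ->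
  Tlen (rcons s j) = Tlen s + (depth s j).+1.
Proof.
move=> hs hj; rewrite /Tlen /nverts size_rcons big_nat_recr //= depth_rcons_new //.
congr (_ + _); apply: eq_big_nat => v /andP [_ hv]; apply: depth_rcons_old => //.
Qed.

Lemma Wien_rcons s j : valid s -> j <= size s ->
  Wien (rcons s j) = Wien s + \sum_(0 <= u < nverts s) (dist s u j).+1.
Proof.
move=> hs hj; rewrite /Wien /nverts size_rcons big_nat_recr //=.
congr (_ + _).
  apply: eq_big_nat => v /andP [_ hv]; apply: eq_big_nat => u /andP [_ hu].
  apply: dist_rcons_old => //; lia.
apply: eq_big_nat => u /andP [_ hu]; apply: dist_rcons_new => //.
Qed.


Local Close Scope ring_scope.

Lemma trees_auxP k s : s \in trees_aux k -> size s = k /\ valid s.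
Proof.
elim: k s => [|k IH] s; first by rewrite /= inE => /eqP ->; split => // i.
move=> /flattenP [r /mapP [s0 hs0 ->] /mapP [j]]; rewrite mem_iota add0n => /andP [_ hj] ->.
have [h1 h2] := IH _ hs0; rewrite size_rcons h1; split => // i; rewrite size_rcons => hi.
rewrite nth_rcons h1; case: ltnP => hik; first by apply: h2; rewrite h1.
move: hi; rewrite h1 => hi.
have -> : i = k by apply/eqP; rewrite eqn_leq hik -ltnS hi.
by rewrite eqxx; lia.
Qed.

Arguments trees_auxP {k s}.

Lemma trees_aux_rcons k s' : s' \in trees_aux k.+1 ->
  exists s j, [/\ s \in trees_aux k, j < k.+1 & s' = rcons s j].
Proof.
move=> /flattenP [r /mapP [s0 hs0 ->] /mapP [j]]; rewrite mem_iota add0n => /andP [_ hj] ->.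
by exists s0, j.
Qed.

Lemma big_trees (T : Type) (idx : T) (op : Monoid.com_law idx) k (F : seq nat -> T) :
  \big[op/idx]_(s <- trees_aux k.+1) F s =
  \big[op/idx]_(s <- trees_aux k) \big[op/idx]_(j <- iota 0 k.+1) F (rcons s j).
Proof.
change (trees_aux k.+1) with (flatten [seq [seq rcons s j | j <- iota 0 k.+1] | s <- trees_aux k]).
by rewrite big_flatten big_map; apply: eq_bigr => s _; rewrite big_map. Qed.

Local Open Scope ring_scope.

Lemma weight_rcons (R : realFieldType) (th : R) s j :
  weight th (rcons s j) =
  weight th s * (if j == 0 then th / (th + (size s)%:R) else 1 / (th + (size s)%:R)).
Proof.
rewrite /weight size_rcons big_ord_recr /= nth_rcons ltnn eqxx; congr (_ * _).
by apply: eq_bigr => i _; rewrite nth_rcons ltn_ord.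
Qed.

Lemma weight_sum (R : realFieldType) (th : R) k : 0 < th ->
  \sum_(s <- trees_aux k) weight th s = 1.
Proof.
move=> hth; elim: k => [|k IH]; first by rewrite /= big_seq1 /weight big_ord0.
rewrite big_trees -[RHS]IH !big_seq; apply: eq_bigr => s hs.
have [hsz _] := trees_auxP hs.
under eq_bigr => j _ do rewrite weight_rcons hsz.
rewrite -big_distrr /= -[RHS]mulr1; congr (_ * _).
rewrite big_cons /=.
have -> : iota 1 k = index_iota 1 k.+1 by rewrite /index_iota subSS subn0.
rewrite (eq_big_nat _ _ (F2 := fun=> 1 / (th + k%:R))); last first.
  by move=> i /andP [hi _]; case: i hi.
rewrite sumr_const_nat subSS subn0 -mulr_natr.
have hk : 0 < th + k%:R by have := ler0n R k; lra.
by field; rewrite lt0r_neq0.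
Qed.

Section Reindex.
Variables (T : Type) (idx : T) (op : Monoid.com_law idx).

Lemma sum_bits (bs : seq bool) (GF GT : nat -> T) :
  \big[op/idx]_(j <- iota 0 (size bs))
     (if nth false bs j then GT (count id (take j bs)) else GF (count negb (take j bs))) =
  op (\big[op/idx]_(i <- iota 0 (count negb bs)) GF i)
     (\big[op/idx]_(i <- iota 0 (count id bs)) GT i).
Proof.
elim/last_ind: bs => [|bs c IH]; first by rewrite !big_nil Monoid.mulm1.
rewrite size_rcons -addn1 iotaD big_cat /= big_seq1.
rewrite (eq_big_seq (fun j => if nth false bs j then GT (count id (take j bs))
            else GF (count negb (take j bs)))); last first.
  move=> j; rewrite mem_iota add0n => /andP [_ hj].
  by rewrite nth_rcons hj -cats1 takel_cat // ltnW.
rewrite IH add0n nth_rcons ltnn eqxx -cats1 take_size_cat // !count_cat /=.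
case: c => /=; rewrite !addn0 ?add0n.
  by rewrite iotaD big_cat big_seq1 add0n Monoid.mulmA.
rewrite iotaD big_cat big_seq1 add0n -!Monoid.mulmA; congr (op _ _).
exact: Monoid.mulmC.
Qed.
End Reindex.

Lemma count_take_lt (p : pred bool) bs u : (u < size bs)%N -> p (nth false bs u) ->
  (count p (take u bs) < count p bs)%N.
Proof.
move=> hu hp; rewrite -{2}(cat_take_drop u bs) count_cat (drop_nth false hu) /= hp.
rewrite add1n addnS ltnS; exact: leq_addr.
Qed.


Local Close Scope ring_scope.

Lemma valid_rcons s j : valid s -> j <= size s -> valid (rcons s j).
Proof.
move=> hs hj i; rewrite size_rcons ltnS => hi; rewrite nth_rcons.
case: ltnP => h; first exact: hs.
have -> : i = size s by apply/eqP; rewrite eqn_leq h hi.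
by rewrite eqxx.
Qed.

Definition step (st : seq bool * seq nat * seq nat) (j : nat) :=
  let: (bs, s1, s2) := st in
  if nth false bs j then (rcons bs true, s1, rcons s2 (count id (take j bs)))
  else (rcons bs false, rcons s1 (count negb (take j bs)), s2).

Definition phi (s : seq nat) := foldl step ([:: false; true], [::], [::]) (behead s).

Lemma phi_rcons s j : s != [::] -> phi (rcons s j) = step (phi s) j.
Proof. by case: s => // x r _; rewrite /phi /= foldl_rcons. Qed.

Definition idx (bs : seq bool) u :=
  if nth false bs u then count id (take u bs) else count negb (take u bs).

Record Inv (s : seq nat) (bs : seq bool) (s1 s2 : seq nat) : Prop := {
  iv1 : valid s1; iv2 : valid s2;
  isz : size bs = nverts s; isz1 : nverts s1 = count negb bs;
  isz2 : nverts s2 = count id bs;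
  ib0 : nth false bs 0 = false;
  idep : forall u, u < nverts s -> depth s u =
     if nth false bs u then (depth s2 (idx bs u)).+1 else depth s1 (idx bs u);
  idist : forall u v, u < nverts s -> v < nverts s -> dist s u v =
     if nth false bs u == nth false bs v then
       (if nth false bs u then dist s2 (idx bs u) (idx bs v) else dist s1 (idx bs u) (idx bs v))
     else depth s u + depth s v;
  ianc : forall u, u < nverts s -> (1 \in anc s u) = nth false bs u;
  iT : Tlen s = Tlen s1 + Tlen s2 + count id bs;
  iW : Wien s = Wien s1 + count id bs * Tlen s1 + Wien s2 + count negb bs * Tlen s2
               + count id bs * count negb bs }.

Arguments iv1 {s bs s1 s2}.
Arguments iv2 {s bs s1 s2}.
Arguments isz {s bs s1 s2}.
Arguments isz1 {s bs s1 s2}.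
Arguments isz2 {s bs s1 s2}.
Arguments ib0 {s bs s1 s2}.
Arguments idep {s bs s1 s2}.
Arguments idist {s bs s1 s2}.
Arguments ianc {s bs s1 s2}.
Arguments iT {s bs s1 s2}.
Arguments iW {s bs s1 s2}.

Lemma sum_iota (f : nat -> nat) r : \sum_(0 <= i < r) f i = \sum_(i <- iota 0 r) f i.
Proof. by rewrite /index_iota subn0. Qed.

Lemma sum_const_iota c r : \sum_(i <- iota 0 r) c = r * c.
Proof. by rewrite -sum_iota sum_nat_const_nat subn0. Qed.

Section Step.
Variables (s : seq nat) (bs : seq bool) (s1 s2 : seq nat) (j : nat).
Hypotheses (hs : valid s) (hj : j <= size s) (hs1 : 1 <= size s) (I : Inv s bs s1 s2).

Let sz := isz I.
Lemma hjbs : j < size bs. Proof. by rewrite sz. Qed.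
Lemma nthO c u : u <= size s -> nth false (rcons bs c) u = nth false bs u.
Proof. by move=> hu; rewrite nth_rcons sz ltnS hu. Qed.
Lemma idxO c u : u <= size s -> idx (rcons bs c) u = idx bs u.
Proof.
by move=> hu; rewrite /idx nthO // -cats1 takel_cat // sz /nverts ltnW.
Qed.
Lemma nthN c : nth false (rcons bs c) (size s).+1 = c.
Proof. by rewrite nth_rcons sz ltnn eqxx. Qed.
Lemma idxN c : idx (rcons bs c) (size s).+1 = if c then count id bs else count negb bs.
Proof. by rewrite /idx nthN -cats1 -[(size s).+1]/(nverts s) -sz take_size_cat. Qed.
Lemma idxA u : u <= size s -> nth false bs u = false -> idx bs u <= size s1.
Proof.
move=> hu hb; have hu' : u < size bs by rewrite sz.
have := @count_take_lt negb bs u hu'; rewrite hb /idx hb => /(_ isT).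
by rewrite -(isz1 I) /nverts ltnS.
Qed.
Lemma idxB u : u <= size s -> nth false bs u = true -> idx bs u <= size s2.
Proof.
move=> hu hb; have hu' : u < size bs by rewrite sz.
have := @count_take_lt id bs u hu'; rewrite hb /idx hb => /(_ isT).
by rewrite -(isz2 I) /nverts ltnS.
Qed.

Lemma dist_wlog (P : nat -> nat -> Prop) :
  (forall u v, P u v -> P v u) -> (forall u v, u <= v -> P u v) -> forall u v, P u v.
Proof. move=> hsym h u v; case: (leqP u v) => huv; [exact: h | apply: hsym; apply: h; exact: ltnW]. Qed.

Lemma Inv_stepA : nth false bs j = false ->
  Inv (rcons s j) (rcons bs false) (rcons s1 (count negb (take j bs))) s2.
Proof.
move=> hb; set ja := count negb (take j bs).
have hja : ja <= size s1 by have := idxA j hj hb; rewrite /idx hb.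
have depj : depth s j = depth s1 ja.
  by rewrite (idep I j); [rewrite hb /idx hb | rewrite /nverts ltnS].
have e1 : count negb bs = (size s1).+1 by rewrite -(isz1 I).
split.
- exact: valid_rcons (iv1 I) hja.
- exact: (iv2 I).
- by rewrite size_rcons sz /nverts size_rcons.
- by rewrite /nverts size_rcons -cats1 count_cat /= e1 addn1.
- by rewrite -cats1 count_cat /= ?addn0 (isz2 I).
- by rewrite nth_rcons sz (ib0 I).
- move=> u; rewrite /nverts size_rcons ltnS => hu.
  have [hu'|->] : u <= size s \/ u = (size s).+1 by lia.
    rewrite depth_rcons_old // nthO // idxO // (idep I) //.
    case hbu: (nth false bs u) => //.
    by rewrite (depth_rcons_old _ _ _ (iv1 I) (idxA _ hu' hbu)).
  rewrite depth_rcons_new // nthN idxN e1 depth_rcons_new //; first by rewrite depj.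
  exact: (iv1 I).
- move=> u v hu hv; wlog huv : u v hu hv / u <= v.
    move=> H; case: (leqP u v) => huv; first exact: H.
    rewrite dist_sym H //; last exact: ltnW.
    rewrite eq_sym; case: eqP => [->|_]; last exact: addnC.
    by case: ifP => _; apply: dist_sym.
  move: hu hv; rewrite /nverts size_rcons !ltnS => hu hv.
  have [hv'|->] : v <= size s \/ v = (size s).+1 by lia.
    have hu' : u <= size s by lia.
    rewrite dist_rcons_old // !nthO // !idxO // (idist I) // !depth_rcons_old //.
    case hbu: (nth false bs u); case hbv: (nth false bs v) => //=.
    by rewrite dist_rcons_old //; [exact: (iv1 I)|exact: idxA|exact: idxA].
  have [hu'|->] : u <= size s \/ u = (size s).+1 by lia.
    rewrite dist_rcons_new // nthO // nthN idxO // idxN (idist I) // ?ltnS // hb.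
    rewrite depth_rcons_old // depth_rcons_new //.
    case hbu: (nth false bs u) => //=; last first.
      rewrite e1 /idx hb -/ja dist_rcons_new //; [exact: (iv1 I)|].
      by have := idxA u hu' hbu; rewrite /idx hbu.
    by rewrite addnS.
  by rewrite !dist_refl nthN eqxx.
- move=> u; rewrite /nverts size_rcons ltnS => hu.
  have [hu'|->] : u <= size s \/ u = (size s).+1 by lia.
    by rewrite anc_rcons_old // nthO // (ianc I).
  rewrite anc_rcons_new // nthN in_cons (ianc I) ?ltnS // hb.
  by case: (size s) hs1.
- rewrite Tlen_rcons // (iT I) Tlen_rcons //; last exact: (iv1 I).
  rewrite -cats1 count_cat /= ?addn0 depj; lia.
- rewrite Wien_rcons // (iW I) Wien_rcons //; last exact: (iv1 I).
  rewrite Tlen_rcons //; last exact: (iv1 I).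
  rewrite -!cats1 !count_cat /= ?addn0 addn1.
  rewrite !sum_iota -[nverts s1]/(size s1).+1 -e1 -sz.
  rewrite (eq_big_seq (fun u => if nth false bs u then
             (fun i => depth s2 i + (depth s1 ja).+2) (count id (take u bs))
           else (fun i => (dist s1 i ja).+1) (count negb (take u bs)))); last first.
    move=> u; rewrite mem_iota add0n sz => /andP [_ hu].
    rewrite (idist I) // hb.
    case hbu: (nth false bs u) => //=.
      by rewrite (idep I) // hbu depj /idx hbu; lia.
    by rewrite /idx hbu hb.
  rewrite (@sum_bits _ _ _ bs (fun i => (dist s1 i ja).+1) (fun i => depth s2 i + (depth s1 ja).+2)) big_split /= sum_const_iota -sum_iota -(isz2 I) /Tlen -/(Tlen s2).
  set A := \sum_(i <- _) (dist s1 i ja).+1.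
  set W1 := Wien s1; set W2 := Wien s2; set T1 := Tlen s1; set T2 := Tlen s2.
  set m := count id bs; set a := count negb bs; set d := depth s1 ja.
  ring.
Qed.

Lemma Inv_stepB : nth false bs j = true ->
  Inv (rcons s j) (rcons bs true) s1 (rcons s2 (count id (take j bs))).
Proof.
move=> hb; set jb := count id (take j bs).
have hjb : jb <= size s2 by have := idxB j hj hb; rewrite /idx hb.
have depj : depth s j = (depth s2 jb).+1.
  by rewrite (idep I j); [rewrite hb /idx hb | rewrite /nverts ltnS].
have e2 : count id bs = (size s2).+1 by rewrite -(isz2 I).
split.
- exact: (iv1 I).
- exact: valid_rcons (iv2 I) hjb.
- by rewrite size_rcons sz /nverts size_rcons.
- by rewrite -cats1 count_cat /= ?addn0 (isz1 I).
- by rewrite /nverts size_rcons -cats1 count_cat /= e2 addn1.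
- by rewrite nth_rcons sz (ib0 I).
- move=> u; rewrite /nverts size_rcons ltnS => hu.
  have [hu'|->] : u <= size s \/ u = (size s).+1 by lia.
    rewrite depth_rcons_old // nthO // idxO // (idep I) //.
    case hbu: (nth false bs u) => //.
    by rewrite (depth_rcons_old _ _ _ (iv2 I) (idxB _ hu' hbu)).
  rewrite depth_rcons_new // nthN idxN e2 depth_rcons_new //; first by rewrite depj.
  exact: (iv2 I).
- move=> u v hu hv; wlog huv : u v hu hv / u <= v.
    move=> H; case: (leqP u v) => huv; first exact: H.
    rewrite dist_sym H //; last exact: ltnW.
    rewrite eq_sym; case: eqP => [->|_]; last exact: addnC.
    by case: ifP => _; apply: dist_sym.
  move: hu hv; rewrite /nverts size_rcons !ltnS => hu hv.
  have [hv'|->] : v <= size s \/ v = (size s).+1 by lia.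
    have hu' : u <= size s by lia.
    rewrite dist_rcons_old // !nthO // !idxO // (idist I) // !depth_rcons_old //.
    case hbu: (nth false bs u); case hbv: (nth false bs v) => //=.
    by rewrite dist_rcons_old //; [exact: (iv2 I)|exact: idxB|exact: idxB].
  have [hu'|->] : u <= size s \/ u = (size s).+1 by lia.
    rewrite dist_rcons_new // nthO // nthN idxO // idxN (idist I) // ?ltnS // hb.
    rewrite depth_rcons_old // depth_rcons_new //.
    case hbu: (nth false bs u) => //=; last by rewrite addnS.
    rewrite e2 /idx hb -/jb dist_rcons_new //; [exact: (iv2 I)|].
    by have := idxB u hu' hbu; rewrite /idx hbu.
  by rewrite !dist_refl nthN eqxx.
- move=> u; rewrite /nverts size_rcons ltnS => hu.
  have [hu'|->] : u <= size s \/ u = (size s).+1 by lia.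
    by rewrite anc_rcons_old // nthO // (ianc I).
  rewrite anc_rcons_new // nthN in_cons (ianc I) ?ltnS // hb.
  by rewrite orbT.
- rewrite Tlen_rcons // (iT I) Tlen_rcons //; last exact: (iv2 I).
  rewrite -cats1 count_cat /= ?addn0 depj; lia.
- rewrite Wien_rcons // (iW I) Wien_rcons //; last exact: (iv2 I).
  rewrite Tlen_rcons //; last exact: (iv2 I).
  rewrite -!cats1 !count_cat /= ?addn0 addn1.
  rewrite !sum_iota -[nverts s2]/(size s2).+1 -e2 -sz.
  rewrite (eq_big_seq (fun u => if nth false bs u then
             (fun i => (dist s2 i jb).+1) (count id (take u bs))
           else (fun i => depth s1 i + (depth s2 jb).+2) (count negb (take u bs)))); last first.
    move=> u; rewrite mem_iota add0n sz => /andP [_ hu].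
    rewrite (idist I) // hb.
    case hbu: (nth false bs u) => //=.
      by rewrite /idx hbu hb.
    by rewrite (idep I) // hbu depj /idx hbu; lia.
  rewrite (@sum_bits _ _ _ bs (fun i => depth s1 i + (depth s2 jb).+2) (fun i => (dist s2 i jb).+1)) big_split /=.
  rewrite sum_const_iota -sum_iota -(isz1 I) /Tlen -/(Tlen s1).
  set A := \sum_(i <- _) (dist s2 i jb).+1.
  set W1 := Wien s1; set W2 := Wien s2; set T1 := Tlen s1; set T2 := Tlen s2.
  set m := count id bs; set a := count negb bs; set d := depth s2 jb.
  ring.
Qed.

End Step.



Local Close Scope ring_scope.

Lemma Inv_base : Inv [:: 0] [:: false; true] [::] [::].
Proof.
split => //.
- by case=> [|[|u]].
- by case=> [|[|u]] // [|[|v]].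
- by case=> [|[|u]].
- by rewrite /Tlen /nverts /= big_nat_recr //= !big_nat1.
- by rewrite /Wien /Tlen /nverts /= big_nat_recr //= !big_nat1 !big_geq.
Qed.

Lemma Inv_phi k s : s \in trees_aux k.+1 -> Inv s (phi s).1.1 (phi s).1.2 (phi s).2.
Proof.
elim: k s => [|k IH] s'.
  move=> /trees_aux_rcons [s [j [hs hj ->]]].
  move: hs; rewrite /= inE => /eqP ->; move: hj; rewrite ltnS leqn0 => /eqP ->.
  exact: Inv_base.
move=> /trees_aux_rcons [s [j [hs hj ->]]].
have [hsz hv] := trees_auxP hs.
have hne : s != [::] by rewrite -size_eq0 hsz.
rewrite phi_rcons //; have := IH _ hs.
case: (phi s) => [[bs s1] s2] /= I.
have hj' : j <= size s by rewrite hsz -ltnS.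
have h1 : 1 <= size s by rewrite hsz.
case hb: (nth false bs j).
  exact: Inv_stepB.
exact: Inv_stepA.
Qed.


Local Close Scope ring_scope.
Local Open Scope ring_scope.

Section Split.
Variables (R : realFieldType) (th : R).
Hypothesis hth : 0 < th.

Definition stepc (p : seq bool * R) : seq (seq bool * R) :=
  [:: (rcons p.1 false, p.2 * ((th + ((count negb p.1).-1)%:R) / (th + ((size p.1).-1)%:R)));
      (rcons p.1 true, p.2 * ((count id p.1)%:R / (th + ((size p.1).-1)%:R)))].

Fixpoint Bw (k : nat) : seq (seq bool * R) :=
  match k with
  | 0 => [:: ([:: false; true], 1)]
  | k'.+1 => flatten (map stepc (Bw k'))
  end.

Lemma BwP k p : p \in Bw k -> [/\ size p.1 = k.+2, (0 < count negb p.1)%N,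
  (0 < count id p.1)%N & nth false p.1 0 = false].
Proof.
elim: k p => [|k IH] p; first by rewrite /= inE => /eqP ->.
move=> /flattenP [r /mapP [q hq ->]]; have [h1 h2 h3 h4] := IH _ hq.
rewrite !inE => /orP [] /eqP -> /=; rewrite size_rcons nth_rcons h1 /= -cats1 !count_cat /=;
  split => //; try by rewrite h1. all: by rewrite addn_gt0 ?h2 ?h3.
Qed.

Arguments BwP {k p}.

Lemma thpos (n : nat) : th + n%:R != 0.
Proof. apply: lt0r_neq0; have := ler0n R n; have := hth; lra. Qed.

Lemma sum_weight_rcons (w : R) k (F : seq nat -> R) : 
  \sum_(s <- trees_aux k.+1) weight w s * F s =
  \sum_(s <- trees_aux k) \sum_(j <- iota 0 k.+1)
     weight w s * ((if j == 0 then w / (w + k%:R) else 1 / (w + k%:R)) * F (rcons s j)).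
Proof.
rewrite big_trees !big_seq; apply: eq_bigr => s hs; apply: eq_bigr => j _.
by have [hsz _] := trees_auxP hs; rewrite weight_rcons hsz mulrA.
Qed.

Lemma count_rcons (p : pred bool) s x : count p (rcons s x) = (count p s + p x)%N.
Proof. by rewrite -cats1 count_cat /= addn0. Qed.

Lemma split_sum k (H : seq bool * seq nat * seq nat -> R) :
  \sum_(s <- trees_aux k.+1) weight th s * H (phi s) =
  \sum_(p <- Bw k) p.2 * \sum_(s1 <- trees_aux (count negb p.1).-1)
      \sum_(s2 <- trees_aux (count id p.1).-1) (weight th s1 * weight 1 s2 * H (p.1, s1, s2)).
Proof.
have th0 : th != 0 by apply: lt0r_neq0.
elim: k H => [|k IH] H.
  rewrite sum_weight_rcons /= !big_seq1 /weight !big_ord0 /= addr0 divff //.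
  by rewrite !mul1r.
rewrite sum_weight_rcons.
set f := fun j => if j == 0%N then th / (th + k.+1%:R) else 1 / (th + k.+1%:R).
set H' := fun st => \sum_(j <- iota 0 k.+2) f j * H (step st j).
have -> : \sum_(s <- trees_aux k.+1) \sum_(j <- iota 0 k.+2) weight th s * (f j * H (phi (rcons s j)))
    = \sum_(s <- trees_aux k.+1) weight th s * H' (phi s).
  apply: eq_big_seq => s hs; rewrite mulr_sumr; apply: eq_bigr => j _.
  have [hsz _] := trees_auxP hs.
  by rewrite phi_rcons // -size_eq0 hsz.
rewrite IH; change (Bw k.+1) with (flatten (map stepc (Bw k))).
rewrite big_flatten big_map; apply: eq_big_seq => -[bs c] hp.
have [/= h1 h2 h3 h4] := BwP hp.
rewrite big_cons big_cons big_nil addr0 /= !count_rcons /= addn0 addn1 /= h1 /=.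
set a := count negb bs; set m := count id bs.
rewrite -!mulrA -mulrDr; congr (c * _).
have HE : forall s1 s2, H' (bs, s1, s2) =
   \sum_(i <- iota 0 a) ((if i == 0%N then th else 1) / (th + k.+1%:R) *
                        H (rcons bs false, rcons s1 i, s2)) +
   \sum_(i <- iota 0 m) (1 / (th + k.+1%:R) * H (rcons bs true, s1, rcons s2 i)).
  move=> s1 s2; rewrite /H' -h1.
  rewrite (eq_big_seq (fun j => if nth false bs j then
     (fun i => 1 / (th + k.+1%:R) * H (rcons bs true, s1, rcons s2 i)) (count id (take j bs))
   else (fun i => (if i == 0%N then th else 1) / (th + k.+1%:R) *
                        H (rcons bs false, rcons s1 i, s2)) (count negb (take j bs)))).
    exact: (@sum_bits _ _ _ bs (fun i => (if i == 0%N then th else 1) / (th + k.+1%:R) *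
                        H (rcons bs false, rcons s1 i, s2))
            (fun i => 1 / (th + k.+1%:R) * H (rcons bs true, s1, rcons s2 i))).
  move=> j _; rewrite /step /f.
  case hb: (nth false bs j).
    by case: j hb => [|j]; [rewrite h4|].
  case: j hb => [|j] hb /=; first by rewrite take0.
  case: bs h1 h4 hb {hp h2 h3 a m} => [|b0 bs] //= _ -> hb /=.
  done.
rewrite ?addn0 ?addn1 /=.
under eq_bigr => s1 _ do under eq_bigr => s2 _ do rewrite HE mulrDr.
under eq_bigr => s1 _ do rewrite big_split /=.
rewrite big_split /=.
have hk := thpos k.+1.
congr (_ + _).
  have ea : trees_aux a = trees_aux a.-1.+1 by rewrite prednK.
  rewrite ea big_trees prednK // mulrA mulr_sumr /=.
  apply: eq_big_seq => s1 hs1; have [hsz _] := trees_auxP hs1.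
  rewrite [RHS]mulr_sumr /=.
  under [RHS]eq_bigr => j _ do rewrite mulr_sumr.
  rewrite [RHS]exchange_big /=; apply: eq_bigr => s2 _; rewrite mulr_sumr.
  apply: eq_bigr => i _; rewrite weight_rcons hsz.
  have ha := thpos a.-1.
  case: (i == 0%N); field; by rewrite ?ha ?nat1r ?hk.
have em : trees_aux m = trees_aux m.-1.+1 by rewrite prednK.
rewrite em mulrA mulr_sumr; apply: eq_big_seq => s1 hs1.
rewrite big_trees prednK // mulr_sumr; apply: eq_big_seq => s2 hs2.
have [hsz _] := trees_auxP hs2.
rewrite !mulr_sumr; apply: eq_bigr => i _; rewrite weight_rcons hsz.
have hm : (1 + (m.-1)%:R : R) = m%:R by rewrite nat1r prednK.
have hm0 : (m%:R : R) != 0 by rewrite pnatr_eq0 -lt0n.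
case: (i == 0%N); rewrite hm; field; by rewrite ?hm0 ?nat1r ?hk.
Qed.

End Split.


Local Close Scope ring_scope.

Arguments Inv_phi {k s}.

Lemma count_idnegb (bs : seq bool) : count id bs + count negb bs = size bs.
Proof. by elim: bs => //= b bs IH; case: b; rewrite /= -IH; lia. Qed.

Lemma subsize1_phi k s : s \in trees_aux k.+1 -> subsize1 s = count id (phi s).1.1.
Proof.
move=> hs; have I := Inv_phi hs; move: I; case: (phi s) => [[bs s1] s2] I /=.
rewrite /subsize1 (eq_in_count (a2 := nth false bs)); last first.
  by move=> v; rewrite mem_iota add0n => /andP [_ hv]; rewrite (ianc I).
by rewrite -(isz I) -[in RHS](mkseq_nth false bs) /mkseq count_map.
Qed.

Arguments subsize1_phi {k s}.

Local Open Scope ring_scope.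

Theorem mainTheorem10 (R : realFieldType) (theta : R) (n : nat) :
  0 < theta -> (2 <= n)%N ->
  forall w t : nat,
    lawWT theta n w t =
    \sum_(1 <= m < n)
      lawK theta n m *
      \sum_(s1 <- trees (n - m)) \sum_(s2 <- trees m)
        weight theta s1 * weight 1 s2 *
        ((Wien s1 + m * Tlen s1 + Wien s2 + (n - m) * Tlen s2 + m * (n - m) == w)%N
         && (Tlen s1 + Tlen s2 + m == t)%N)%:R.
Proof.
move=> hth hn w t.
case: n hn => [|[|k]] // _.
pose G (st : seq bool * seq nat * seq nat) : R :=
  ((Wien st.1.2 + count id st.1.1 * Tlen st.1.2 + Wien st.2
     + (k.+2 - count id st.1.1) * Tlen st.2 + count id st.1.1 * (k.+2 - count id st.1.1) == w)%N
   && (Tlen st.1.2 + Tlen st.2 + count id st.1.1 == t)%N)%:R.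
have L : lawWT theta k.+2 w t = \sum_(s <- trees_aux k.+1) weight theta s * G (phi s).
  rewrite /lawWT /trees [k.+2.-1]/=; apply: eq_big_seq => s hs; congr (_ * _).
  have [hsz _] := trees_auxP hs.
  have I := Inv_phi hs; move: I; rewrite /G; case: (phi s) => [[bs s1] s2] I /=.
  have e : (k.+2 - count id bs = count negb bs)%N.
    have hb : size bs = k.+2 by rewrite (isz I) /nverts hsz.
    by rewrite -hb -(count_idnegb bs) addKn.
  by rewrite e (iW I) (iT I).
rewrite L split_sum //.
have K : forall m, lawK theta k.+2 m = \sum_(p <- @Bw _ theta k) p.2 * (count id p.1 == m)%:R.
  move=> m; rewrite /lawK /trees [k.+2.-1]/=.
  transitivity (\sum_(s <- trees_aux k.+1) weight theta s *
       (fun st : seq bool * seq nat * seq nat => ((count id st.1.1 == m)%:R : R)) (phi s)).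
    by apply: eq_big_seq => s hs; rewrite (subsize1_phi hs).
  rewrite (split_sum _ _ hth k (fun st => ((count id st.1.1 == m)%:R : R))); apply: eq_bigr => p _ /=.
  congr (_ * _).
  rewrite (eq_bigr (fun s1 => weight theta s1 * (count id p.1 == m)%:R)); last first.
    move=> s1 _; under eq_bigr => s2 _ do rewrite mulrAC.
    by rewrite -mulr_sumr weight_sum ?ltr01 // mulr1.
  by rewrite -mulr_suml weight_sum // mul1r.
under [RHS]eq_bigr => m _ do rewrite K mulr_suml.
rewrite [RHS]exchange_big /=; apply: eq_big_seq => p hp.
have [h1 h2 h3 h4] := BwP _ _ _ _ hp.
have hidn := count_idnegb p.1.
have hm : count id p.1 \in index_iota 1 k.+2 by rewrite mem_index_iota h3 /= -h1 -hidn -{1}[count id p.1]addn0 ltn_add2l.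
have hu : uniq (index_iota 1 k.+2) by rewrite /index_iota iota_uniq.
rewrite (bigD1_seq _ hm hu) /=.
  rewrite eqxx mulr1 [X in _ = _ + X]big1 ?addr0; last first.
    by move=> m /negbTE; rewrite eq_sym => ->; rewrite mulr0 mul0r.
  have e : (k.+2 - count id p.1 = count negb p.1)%N by rewrite -h1 -hidn addKn.
  by rewrite /trees /G /= e.
Qed.
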